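(* Let $\mathbb{K}$ be a field and let $f,g,u,v$ be endomorphisms of the additive group $(\mathbb{K},+)$ such that $$\forall (x,t)\in\mathbb{K}^2,\quad g(t^2x)+v(tx)=t\,f(x)+t\,u(tx).$$ (a) If $\mathbb{K}$ has characteristic not $2$, there are scalars $\lambda,\mu$ such that $f(x)=\lambda x$, $u(x)=\mu x$, $v(x)=\lambda x$ and $g(x)=\mu x$ for all $x$. (b) If $\mathbb{K}$ has characteristic $2$, there are scalars $\lambda,\mu$ and a root-linear form $\alpha$ on $\mathbb{K}$ such that $f(x)=\lambda x+\alpha(x)$, $u(x)=\mu x$, $v(x)=\lambda x$ and $g(x)=\mu x+\alpha(x)$ for all $x$.
   Context: In characteristic $2$, a root-linear form on $\mathbb{K}$ is an additive map $\alpha:\mathbb{K}\to\mathbb{K}$ with $\alpha(\lambda^2x)=\lambda\alpha(x)$ for all $\lambda,x\in\mathbb{K}$. *)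

(* Defs.v *)
From HB Require Import structures.
From mathcomp Require Import all_boot all_order all_algebra.
Set Implicit Arguments. Unset Strict Implicit. Unset Printing Implicit Defensive.
Import GRing.Theory.
Local Open Scope ring_scope.

Definition additive_map (K : fieldType) (f : K -> K) : Prop :=
  forall x y : K, f (x + y) = f x + f y.

Definition root_linear (K : fieldType) (a : K -> K) : Prop :=
  additive_map a /\ forall l x : K, a (l ^+ 2 * x) = l * a x.

(* Main.v *)
Require Import Defs.
From HB Require Import structures.
From mathcomp Require Import all_boot all_order all_algebra ring.
Import GRing.Theory.
Local Open Scope ring_scope.
Set Implicit Arguments. Unset Strict Implicit.

Lemma am0 (K : fieldType) (f : K -> K) : additive_map f -> f 0 = 0.
Proof. move=> h; have := h 0 0; rewrite addr0 => e; apply: (addrI (f 0)); by rewrite -e addr0. Qed.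

Lemma amN (K : fieldType) (f : K -> K) x : additive_map f -> f (- x) = - f x.
Proof. move=> h; apply/eqP; rewrite -subr_eq0 opprK -(h _ _) addNr (am0 h) //. Qed.

Lemma comb (K : fieldType) (k1 k2 a1 b1 a2 b2 c : K) :
  a1 = b1 -> a2 = b2 -> c = k1 * (a1 - b1) + k2 * (a2 - b2) -> c = 0.
Proof. by move=> -> -> ->; rewrite !subrr !mulr0 addr0. Qed.

Lemma comb3 (K : fieldType) (k1 k2 k3 a1 b1 a2 b2 a3 b3 c : K) :
  a1 = b1 -> a2 = b2 -> a3 = b3 ->
  c = k1 * (a1 - b1) + k2 * (a2 - b2) + k3 * (a3 - b3) -> c = 0.
Proof. by move=> -> -> -> ->; rewrite !subrr !mulr0 !addr0. Qed.

Lemma key (K : fieldType) (a v : K -> K) (ha : additive_map a) (hv : additive_map v)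
  (A : forall x t : K, a (t ^+ 2 * x) + v (t * x) = t * a x + t * v x) :
  forall z, v z = z * v 1.
Proof.
have EA : forall t y, v (t * y) - t * v y = t * a y - a (t ^+ 2 * y).
  move=> t y; have e := A y t.
  have -> : v (t * y) = t * a y + t * v y - a (t ^+ 2 * y) by rewrite -e [a _ + _]addrC addrK.
  ring.
have M : forall t s x, v (t * (s * x)) - t * v (s * x) = v (t * (s ^+ 2 * x)) - t * v (s ^+ 2 * x).
  move=> t s x.
  have e1 : v ((t * s) * x) - (t * s) * v x = (v (t * (s * x)) - t * v (s * x)) + t * (v (s * x) - s * v x) by rewrite mulrA; ring.
  have e2 : v ((t * s) * x) - (t * s) * v x = (v (t * (s ^+ 2 * x)) - t * v (s ^+ 2 * x)) + t * (v (s * x) - s * v x).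
    rewrite !EA exprMn -!mulrA; ring.
  by apply: (addIr (t * (v (s * x) - s * v x))); rewrite -e1 -e2.
have E1 : forall t s, s != 0 -> v (t * 1) - t * v 1 = v (t * s) - t * v s.
  move=> t s s0; have := M t s s^-1; rewrite mulfV // expr2 -mulrA mulfV // !mulr1; exact: id.
move=> t.
case: (eqVneq t 0) => [->|t0]; first by rewrite mul0r (am0 hv).
case: (eqVneq t (-1)) => [->|t1]; first by rewrite (amN _ hv) mulN1r.
have t1' : t + 1 != 0 by rewrite addr_eq0.
have e1 := E1 t t t0; have e2 := E1 t (t + 1) t1'.
rewrite !mulr1 mulrDr mulr1 (hv (t * t) t) (hv t 1) in e1 e2.
apply/eqP; rewrite -subr_eq0; apply/eqP.
have h : v t - t * v 1 = (v t - t * v 1) + (v t - t * v 1) by rewrite {1}e2 {2}e1; ring.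
apply: (addrI (v t - t * v 1)); by rewrite -h addr0.
Qed.

Theorem lemma3p1 (K : fieldType) (f g u v : K -> K)
  (hf : additive_map f) (hg : additive_map g)
  (hu : additive_map u) (hv : additive_map v)
  (H : forall x t : K, g (t ^+ 2 * x) + v (t * x) = t * f x + t * u (t * x)) :
  (~ (2%N \in [pchar K]) ->
     exists l m : K, forall x : K,
       [/\ f x = l * x, u x = m * x, v x = l * x & g x = m * x]) /\
  (2%N \in [pchar K] ->
     exists (l m : K) (a : K -> K), root_linear a /\ forall x : K,
       [/\ f x = l * x + a x, u x = m * x, v x = l * x & g x = m * x + a x]).
Proof.
have H1 : forall x, g x + v x = f x + u x.
  by move=> x; have := H x 1; rewrite expr1n !mul1r.
split.
  move=> h.
  have n2 : (2%:R : K) != 0.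
    by apply/negP => e; apply: h; rewrite inE /= e.
  have VG : forall x t, v (t * x) = t * f x /\ g (t ^+ 2 * x) = t * u (t * x).
    move=> x t; have Hp := H x t; have Hm := H x (-t).
    rewrite sqrrN !mulNr (amN _ hv) (amN _ hu) in Hm.
    split.
      have : 2%:R * (v (t * x) - t * f x) = 0 by apply: (comb (k1:=1) (k2:=-1) Hp Hm); ring.
      by move/eqP; rewrite mulf_eq0 (negbTE n2) /= subr_eq0 => /eqP.
    have : 2%:R * (g (t ^+ 2 * x) - t * u (t * x)) = 0 by apply: (comb (k1:=1) (k2:=1) Hp Hm); ring.
    by move/eqP; rewrite mulf_eq0 (negbTE n2) /= subr_eq0 => /eqP.
  have FV : forall x, f x = v x by move=> x; have [e _] := VG x 1; rewrite !mul1r in e.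
  have GU : forall x, g x = u x by move=> x; have [_ e] := VG x 1; rewrite expr1n !mul1r in e.
  have UL : forall y, u y = u 1 * y.
    move=> y; case: (eqVneq y 0) => [->|y0]; first by rewrite mulr0 (am0 hu).
    have [_ e] := VG y^-1 y.
    rewrite GU expr2 -mulrA !mulfV // mulr1 in e.
    by rewrite e mulrC.
  exists (f 1), (u 1) => x.
  have [e _] := VG 1 x; rewrite mulr1 in e.
  by split; [rewrite FV e mulrC | exact: UL | rewrite e mulrC | rewrite GU UL].
move=> h.
have N : forall z : K, - z = z by move=> z; rewrite oppr_pchar2.
have two : (1 + 1 : K) = 0 by rewrite addrr_pchar2.
have UL2 : forall t x, u (t * x) = t * u x.
  move=> t x; have Ht := H x (t + 1); have H0 := H x t; have Hy := H1 x.
  have sq : (t + 1) ^+ 2 = t ^+ 2 + 1.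
    have -> : (t + 1) ^+ 2 = t ^+ 2 + 1 + (1 + 1) * t by ring.
    by rewrite two mul0r addr0.
  rewrite sq mulrDl mul1r (hg _ _) mulrDl mul1r (hv _ _) (hu _ _) in Ht.
  have c : u (t * x) + t * u x = 0.
    apply: (comb3 (k1:=-1) (k2:=1) (k3:=1) Ht H0 Hy); ring.
  by rewrite -[t * u x]N; apply/eqP; rewrite -subr_eq0 opprK c.
set m := u 1.
have UL : forall x, u x = m * x by move=> x; rewrite -{1}[x]mulr1 UL2 mulrC.
pose a := fun x => g x - m * x.
have ha : additive_map a by move=> x y; rewrite /a hg; ring.
have A : forall x t, a (t ^+ 2 * x) + v (t * x) = t * a x + t * v x.
  move=> x t; have Hx := H x t; have Hy := H1 x.
  rewrite (UL (t * x)) in Hx; rewrite UL in Hy.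
  apply/eqP; rewrite -subr_eq0; apply/eqP; rewrite /a.
  apply: (comb (k1:=1) (k2:=-t) Hx Hy); ring.
have VL := key ha hv A.
exists (v 1), m, a; split.
  split => // l x; have Ax := A x l; rewrite (VL (l * x)) (VL x) in Ax.
  apply/eqP; rewrite -subr_eq0; apply/eqP.
  apply: (comb (k1:=1) (k2:=0) Ax Ax); ring.
move=> x; have Hy := H1 x; rewrite UL in Hy.
split; [ | exact: UL | by rewrite VL mulrC | by rewrite /a; ring].
apply/eqP; rewrite -subr_eq0; apply/eqP; rewrite /a.
rewrite VL in Hy.
apply: (comb (k1:=-1) (k2:=0) Hy Hy); ring.
Qed.
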